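(* Let $p(x),q(x)\in\mathbb{C}[x]$, let $b\geq 2$ be an integer, and let $\alpha=(\alpha_0,\dots,\alpha_{m-1})\in\mathbb{N}^m$. Then the function $n\mapsto u_{p,q,b,\alpha}(n)$ has a rational generating function; that is, there exist $P(x),Q(x)\in\mathbb{C}[x]$ with $Q(0)\neq 0$ such that $\sum_{n\geq 0}u_{p,q,b,\alpha}(n)x^n=P(x)/Q(x)$ as formal power series.
   Context: $\mathbb{N}=\{0,1,2,\dots\}$. For $n\geq 0$ define $F_{p,q,b,n}(x)=q(x)\prod_{i=0}^{n-1}p(x^{b^i})=\sum_{i\geq 0}c_i(n)x^i$, with the convention $c_i(n)=0$ for $i<0$. Define $$u_{p,q,b,\alpha}(n)=\sum_{k} c_k(n)^{\alpha_0}c_{k+1}(n)^{\alpha_1}\cdots c_{k+m-1}(n)^{\alpha_{m-1}},$$ the sum over all integers $k$ (only finitely many terms are nonzero when some exponent is positive; take $0^0=1$ and assume $\alpha\neq 0$). *)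

(* Defs.v *)
(* Complex numbers are modelled as R[i] = complex R for an
   arbitrary R : realType (mathcomp-analysis reals; real-closed complex). *)
From mathcomp Require Import all_boot all_algebra.
From mathcomp Require Import reals complex.
Set Implicit Arguments. Unset Strict Implicit. Unset Printing Implicit Defensive.
Import GRing.Theory Num.Theory.
Local Open Scope ring_scope.

Definition Fpoly (C : comNzRingType) (p q : {poly C}) (b n : nat) : {poly C} :=
  q * \prod_(i < n) (p \Po 'X^(b ^ i)).

Definition coefc (C : comNzRingType) (p q : {poly C}) (b n : nat) (k : int) : C :=
  match k with
  | Posz k' => (Fpoly p q b n)`_k'
  | Negz _ => 0
  end.

(* u_{p,q,b,alpha}(n) = sum over integers k of
     c_k(n)^{alpha_0} ... c_{k+m-1}(n)^{alpha_{m-1}}   (with 0^0 = 1).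
   When some alpha_j > 0, the summand vanishes unless 0 <= k + j < size F,
   i.e. unless -(m-1) <= k < size F; we sum over k in [-m, size F + m),
   which contains all possibly nonzero terms. *)
Definition useq (C : comNzRingType) (p q : {poly C}) (b m : nat)
    (alpha : 'I_m -> nat) (n : nat) : C :=
  \sum_(i <- iota 0 (size (Fpoly p q b n) + m + m))
     \prod_(j < m) coefc p q b n ((i%:Z - m%:Z) + (j : nat)%:Z) ^+ alpha j.

(* Main.v *)
Require Import Defs.
From mathcomp Require Import all_boot all_algebra.
From mathcomp Require Import reals complex.
From mathcomp Require Import zify ring lra.
Set Implicit Arguments. Unset Strict Implicit. Unset Printing Implicit Defensive.
Import GRing.Theory Num.Theory.
Local Open Scope ring_scope.

Lemma sum_trunc (C : nmodType) (N a : nat) (F : nat -> C) :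
  (a <= N)%N -> (forall i, (a <= i)%N -> (i < N)%N -> F i = 0) ->
  \sum_(i < N) F i = \sum_(i < a) F i.
Proof.
move=> aN H; rewrite (big_ord_widen _ _ aN) [RHS]big_mkcond /=.
apply: eq_bigr => i _; case: ifP => // /negbT; rewrite -leqNgt => ?; exact: H.
Qed.

Lemma linrep_rat (C : comNzRingType) (D : nat) (A : 'M[C]_D) (w : 'rV[C]_D)
  (v : 'cV[C]_D) (u : nat -> C) :
  (forall n, u n = (w *m A ^+ n *m v) 0 0) ->
  exists P Q : {poly C}, Q`_0 != 0 /\
    forall n, P`_n = \sum_(i < n.+1) Q`_i * u (n - i)%N.
Proof.
case: D A w v => [|D] A w v Hu.
  exists 0, 1; split; first by rewrite coef1 oner_neq0.
  move=> n; rewrite coef0 big1 // => i _.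
  by rewrite Hu [w]thinmx0 !mul0mx mxE mulr0.
pose chi := char_poly A.
have chimon : chi \is monic := char_poly_monic A.
have chisz : size chi = D.+2 := size_char_poly A.
pose Q := \poly_(i < D.+2) chi`_(D.+1 - i).
pose P := \poly_(i < D.+1) (\sum_(j < i.+1) Q`_j * u (i - j)%N).
exists P, Q; split.
  rewrite coef_poly /= subn0.
  move/monicP: chimon; rewrite /lead_coef chisz /= => ->; exact: oner_neq0.
move=> n; rewrite coef_poly; case: ltnP => // Dn.
have HQ : forall j, Q`_j = if (j < D.+2)%N then chi`_(D.+1 - j) else 0.
  by move=> j; rewrite coef_poly.
rewrite (@sum_trunc _ n.+1 D.+2 (fun j => Q`_j * u (n - j)%N)) //; last first.
  by move=> i Hi _; rewrite HQ ltnNge Hi mul0r.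
have -> : \sum_(i < D.+2) Q`_i * u (n - i)%N =
  (w *m (A ^+ (n - D.+1) * horner_mx A chi) *m v) 0 0.
  rewrite -[chi in horner_mx _ chi]coefK poly_def chisz.
  rewrite linear_sum /= mulr_sumr mulmx_sumr mulmx_suml summxE.
  rewrite (reindex_inj rev_ord_inj) /=.
  apply: eq_bigr => i _.
  rewrite HQ Hu linearZ /= rmorphXn /= horner_mx_X.
  rewrite -scalerAr -scalemxAr -scalemxAl [RHS]mxE.
  have -> : (D.+1 - (D.+2 - i.+1))%N = i by move: (ltn_ord i); lia.
  rewrite ifT; last by move: (ltn_ord i); lia.
  congr (_ * _); rewrite -exprD.
  by congr ((w *m A ^+ _ *m v) 0 0); move: (ltn_ord i); lia.
by rewrite Cayley_Hamilton mulr0 mulmx0 mul0mx mxE.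
Qed.

Section ZS.
Variable C : nmodType.

Definition zsw (f : int -> C) (lo len : nat) :=
  \sum_(i < len) f (i%:Z - lo%:Z).

Lemma zsw_widen f lo len lo' len' :
  (forall z, f z != 0 -> (- lo%:Z <= z) && (z < len%:Z - lo%:Z)) ->
  (lo <= lo')%N -> (len + lo' <= len' + lo)%N ->
  zsw f lo' len' = zsw f lo len.
Proof.
move=> Hs Hlo Hlen; rewrite /zsw.
have Z : forall z, ~~ ((- lo%:Z <= z) && (z < len%:Z - lo%:Z)) -> f z = 0.
  by move=> z Hz; apply/eqP; apply: contraNT Hz; exact: Hs.
rewrite -(big_mkord xpredT (fun i => f (i%:Z - lo'%:Z))).
rewrite -(big_mkord xpredT (fun i => f (i%:Z - lo%:Z))).
rewrite (@big_cat_nat _ _ _ (lo' - lo)) //=; last by lia.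
rewrite big1_seq ?add0r; last first.
  move=> i /andP[_]; rewrite mem_index_iota => /andP[Hi Hi']; apply: Z; lia.
rewrite (@big_cat_nat _ _ _ (lo' - lo + len)) //=; try lia.
rewrite [\sum_(lo' - lo + len <= i < len') _]big1_seq ?addr0; last first.
  move=> i /andP[_]; rewrite mem_index_iota => /andP[Hi Hi']; apply: Z; lia.
rewrite -{1}[(lo' - lo)%N]add0n big_addn.
have -> : (lo' - lo + len - (lo' - lo) = len)%N by lia.
apply: eq_bigr => i _; congr f; lia.
Qed.

Lemma zsw_eq2 f lo len lo' len' :
  (forall z, f z != 0 -> (- lo%:Z <= z) && (z < len%:Z - lo%:Z)) ->
  (forall z, f z != 0 -> (- lo'%:Z <= z) && (z < len'%:Z - lo'%:Z)) ->
  zsw f lo' len' = zsw f lo len.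
Proof.
move=> H1 H2.
rewrite -(@zsw_widen f lo len (lo + lo') (len + len' + lo + lo')) //; try lia.
by rewrite (@zsw_widen f lo' len' (lo + lo') (len + len' + lo + lo')) //; lia.
Qed.

Definition zs (f : int -> C) (B : nat) := zsw f B (B + B).

Lemma zs_widen f B B' :
  (forall z, f z != 0 -> (- B%:Z <= z) && (z < B%:Z)) -> (B <= B')%N ->
  zs f B' = zs f B.
Proof.
move=> H HB; rewrite /zs; apply: zsw_widen => //; last by lia.
move=> z /H; lia.
Qed.

Lemma zs_sum (I : finType) (F : I -> int -> C) B :
  zs (fun k => \sum_(i : I) F i k) B = \sum_(i : I) zs (F i) B.
Proof. by rewrite /zs /zsw exchange_big. Qed.

Lemma sum_mul_split (F : nat -> C) W b :
  \sum_(i < W * b) F i = \sum_(i < W) \sum_(r < b) F (i * b + r)%N.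
Proof.
elim: W => [|W IH]; first by rewrite mul0n !big_ord0.
rewrite mulSnr big_split_ord /= IH big_ord_recr /=; congr (_ + _).
Qed.

Lemma zs_split f B b :
  zs f (b * B) = \sum_(r < b) zs (fun k => f (b%:Z * k + r%:Z)) B.
Proof.
rewrite /zs /zsw.
have -> : (b * B + b * B = (B + B) * b)%N by lia.
rewrite (sum_mul_split (fun i => f (i%:Z - (b * B)%:Z))) exchange_big /=; apply: eq_bigr => i _; apply: eq_bigr => r _.
congr f; lia.
Qed.
End ZS.

Section ZC.
Variable C : comNzRingType.

Definition zc (P : {poly C}) (z : int) : C :=
  match z with Posz k => P`_k | Negz _ => 0 end.

Lemma zc_neg P z : z < 0 -> zc P z = 0.
Proof. by case: z. Qed.

Lemma zc_supp P z : zc P z != 0 -> (0 <= z) && (z < (size P)%:Z).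
Proof.
case: z => [k|k] //=; apply: contraR => Hk.
by rewrite nth_default //; lia.
by [].
Qed.

Lemma zc_mul P Q z :
  zc (P * Q) z = \sum_(j < size P) P`_j * zc Q (z - j%:Z).
Proof.
case: z => [k|k] /=; last first.
  by rewrite big1 // => j _; rewrite zc_neg ?mulr0 //; lia.
rewrite coefM.
rewrite (@sum_trunc _ (size P) (minn k.+1 (size P)) (fun j => P`_j * zc Q (k%:Z - j%:Z))); last 2 first.
- exact: geq_minr.
- move=> i Hi HiN; case: (leqP (size P) i) => Hs; first by rewrite nth_default ?mul0r.
  by rewrite zc_neg ?mulr0 //; lia.
rewrite (@sum_trunc _ k.+1 (minn k.+1 (size P)) (fun j => P`_j * Q`_(k - j))); last 2 first.
- exact: geq_minl.
- move=> i Hi HiN; case: (leqP (size P) i) => Hs; first by rewrite nth_default ?mul0r.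
  lia.
apply: eq_bigr => i _; congr (_ * _).
have -> : (k%:Z - i%:Z) = Posz (k - i)%N by move: (ltn_ord i); lia.
by [].
Qed.

Lemma zc_comp P (b : nat) (y : int) (r : nat) : (0 < b)%N -> (r < b)%N ->
  zc (P \Po 'X^b) (b%:Z * y + r%:Z) = if r == 0%N then zc P y else 0.
Proof.
move=> b0 rb; case: y => [k|k].
  have -> : b%:Z * k%:Z + r%:Z = Posz (k * b + r)%N by lia.
  rewrite /= coef_comp_poly_Xn //.
  rewrite dvdn_addr ?dvdn_mull // divnMDl // divn_small // addn0.
  case: (r =P 0%N) => [->|/eqP rn0]; first by rewrite dvdn0.
  by rewrite gtnNdvd // lt0n.
rewrite zc_neg; last by lia.
by case: ifP.
Qed.

End ZC.

Lemma eq_zs (C : nmodType) (f g : int -> C) B : (forall k, f k = g k) -> zs f B = zs g B.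
Proof. by move=> H; rewrite /zs /zsw; apply: eq_bigr => i _; rewrite H. Qed.

Lemma zs_mull (C : pzSemiRingType) (c : C) (f : int -> C) B :
  zs (fun k => c * f k) B = c * zs f B.
Proof. by rewrite /zs /zsw mulr_sumr. Qed.

Lemma prod_if (C : comNzRingType) (I : finType) (c : I -> bool) (x : I -> C) :
  \prod_i (if c i then x i else 0) = ([forall i, c i])%:R * \prod_i x i.
Proof.
case: (boolP [forall i, c i]) => [/forallP H|/forallPn [i Hi]].
  by rewrite mul1r; apply: eq_bigr => i _; rewrite H.
by rewrite mul0r (bigD1 i) //= (negbTE Hi) mul0r.
Qed.

Section Main.
Variable C : comNzRingType.
Variables (p : {poly C}) (b : nat).
Hypothesis hb : (2 <= b)%N.
Variables (r M : nat).
Hypothesis hM : (size p <= M)%N.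
Variable t0 : 'I_r.

Definition G n := \prod_(i < n) (p \Po 'X^(b ^ i)).

Lemma G_succ n : G n.+1 = p * (G n \Po 'X^b).
Proof.
rewrite /G big_ord_recl /= expn0 expr1 comp_polyXr; congr (_ * _).
rewrite rmorph_prod; apply: eq_bigr => i _ /=.
by rewrite -comp_polyA comp_Xn_poly -exprM expnS.
Qed.

Definition S := {ffun 'I_r -> 'I_(M + M).+1}.
Definition sh (i : 'I_(M + M).+1) : int := i%:Z - M%:Z.
Lemma sh_bound i : (- M%:Z <= sh i) && (sh i <= M%:Z).
Proof. by rewrite /sh; move: (ltn_ord i); lia. Qed.

Definition Tf n (e : 'I_r -> int) (k : int) := \prod_(t < r) zc (G n) (k + e t).
Definition T n (s : S) := zs (Tf n (fun t => sh (s t))) (size (G n) + M).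

Lemma prod_supp (f : int -> C) (N K : nat) (e : 'I_r -> int) k :
  (forall z, f z != 0 -> (0 <= z) && (z < N%:Z)) ->
  (- K%:Z <= e t0) && (e t0 <= K%:Z) ->
  \prod_(t < r) f (k + e t) != 0 -> (- K%:Z <= k) && (k < (N + K)%:Z).
Proof.
move=> Hf He; apply: contraR => Hk.
rewrite (bigD1 t0) //=.
case: (f (k + e t0) =P 0) => [->|/eqP /Hf H]; first by rewrite mul0r.
exfalso; lia.
Qed.

Lemma T_supp n (s : S) z : Tf n (fun t => sh (s t)) z != 0 ->
  (- (size (G n) + M)%:Z <= z) && (z < (size (G n) + M)%:Z).
Proof.
move=> /(@prod_supp _ (size (G n)) M _ z (@zc_supp _ (G n)) (sh_bound _)); lia.
Qed.

Definition ee (s : S) (J : {ffun 'I_r -> 'I_(size p)}) (rho : nat) (t : 'I_r) : int :=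
  rho%:Z + sh (s t) - (J t)%:Z.
Definition allr s J rho := [forall t, (ee s J rho t %% b)%Z == 0].
Definition qf s J rho : S := [ffun t => inord (absz ((ee s J rho t %/ b)%Z + M%:Z)%R)].
Definition Amat (s s' : S) :=
  \sum_(J : {ffun 'I_r -> 'I_(size p)}) \sum_(rho < b)
     (\prod_t p`_(J t)) * (allr s J rho && (qf s J rho == s'))%:R.

Lemma sh_qf s J (rho : 'I_b) t : sh (qf s J rho t) = (ee s J rho t %/ b)%Z.
Proof.
rewrite /qf ffunE /sh.
have Hb := sh_bound (s t). have HJ := ltn_ord (J t). have Hr := ltn_ord rho.
have HE : (- M%:Z - (size p)%:Z < ee s J rho t) && (ee s J rho t < b%:Z + M%:Z).
  by rewrite /ee; lia.
move: HE; set E := ee s J rho t => HE.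
have Hq : (- M%:Z <= (E %/ b)%Z) && ((E %/ b)%Z <= M%:Z).
  have H1 := divz_eq E b%:Z.
  have H2 : (0 <= (E %% b)%Z) by apply: modz_ge0; lia.
  have H3 : ((E %% b)%Z < b%:Z) by apply: ltz_pmod; lia.
  move: H1 H2 H3; set qq := (E %/ b)%Z; set rr := (E %% b)%Z => H1 H2 H3.
  nia.
rewrite inordK; lia.
Qed.

Lemma Tf_succ n (s : S) (rho : 'I_b) k :
  Tf n.+1 (fun t => sh (s t)) (b%:Z * k + rho%:Z) =
  \sum_(J : {ffun 'I_r -> 'I_(size p)}) (\prod_t p`_(J t)) *
     ((allr s J rho)%:R * Tf n (fun t => sh (qf s J rho t)) k).
Proof.
rewrite /Tf.
under eq_bigr => t _ do rewrite G_succ zc_mul.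
rewrite bigA_distr_bigA /=; apply: eq_bigr => J _.
rewrite big_split /=; congr (_ * _).
rewrite -prod_if; apply: eq_bigr => t _.
rewrite sh_qf.
have H1 := divz_eq (ee s J rho t) b%:Z.
have H2 : (0 <= (ee s J rho t %% b)%Z) by apply: modz_ge0; lia.
have H3 : ((ee s J rho t %% b)%Z < b%:Z) by apply: ltz_pmod; lia.
have -> : b%:Z * k + rho%:Z + sh (s t) - (J t)%:Z =
   b%:Z * (k + (ee s J rho t %/ b)%Z) + (absz (ee s J rho t %% b)%Z)%:Z.
  have -> : b%:Z * k + rho%:Z + sh (s t) - (J t)%:Z = b%:Z * k + ee s J rho t.
    by rewrite /ee !addrA.
  rewrite abszE ger0_norm // {1}H1; ring.
rewrite zc_comp; [|lia|lia].
have -> : (absz (ee s J rho t %% b)%Z == 0%N) = ((ee s J rho t %% b)%Z == 0).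
  by apply/eqP/eqP; lia.
by [].
Qed.

Lemma T_succ n (s : S) : T n.+1 s = \sum_(s' : S) Amat s s' * T n s'.
Proof.
rewrite /T.
set B0 := (size (G n.+1) + M + (size (G n) + M))%N.
rewrite -(@zs_widen _ _ _ (b * B0)); last 2 first.
- exact: T_supp.
- rewrite /B0; nia.
rewrite zs_split.
transitivity (\sum_(rho < b) \sum_(J : {ffun 'I_r -> 'I_(size p)})
   (\prod_t p`_(J t)) * ((allr s J rho)%:R * T n (qf s J rho))).
  apply: eq_bigr => rho _.
  rewrite (eq_zs _ (Tf_succ n s rho)) zs_sum; apply: eq_bigr => J _.
  rewrite zs_mull zs_mull; congr (_ * (_ * _)).
  rewrite /T; apply: zs_widen; first exact: T_supp.
  rewrite /B0; lia.
rewrite exchange_big /=.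
under [RHS]eq_bigr => s' _ do rewrite /Amat mulr_suml.
rewrite [RHS]exchange_big /=; apply: eq_bigr => J _.
under [RHS]eq_bigr => s' _ do rewrite mulr_suml.
rewrite [RHS]exchange_big /=; apply: eq_bigr => rho _.
rewrite (bigD1 (qf s J rho)) //= eqxx andbT.
rewrite [X in _ = _ + X]big1 ?addr0; first by rewrite mulrA.
move=> s' Hs'; rewrite eq_sym (negbTE Hs') andbF mulr0 mul0r //.
Qed.

End Main.

Section Final.
Variable C : comNzRingType.

Lemma prod_nseq (F : nat -> C) k a : \prod_(i <- nseq k a) F i = F a ^+ k.
Proof. by elim: k => [|k IH]; rewrite ?big_nil ?expr0 // big_cons IH exprS. Qed.

Definition flatL m (alpha : 'I_m -> nat) : seq nat :=
  flatten [seq nseq (alpha j) (j : nat) | j <- enum 'I_m].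

Lemma prod_flat m (alpha : 'I_m -> nat) (x : nat -> C) :
  \prod_(j < m) x j ^+ alpha j =
  \prod_(t < size (flatL alpha)) x (nth 0%N (flatL alpha) t).
Proof.
have -> : \prod_(t < size (flatL alpha)) x (nth 0%N (flatL alpha) t) =
          \prod_(t <- flatL alpha) x t by rewrite (big_nth 0%N) big_mkord.
rewrite /flatL big_flatten big_map /=.
under [RHS]eq_bigr => j _ do rewrite prod_nseq.
by rewrite big_enum.
Qed.

Lemma flatL_lt m (alpha : 'I_m -> nat) t :
  (t < size (flatL alpha))%N -> (nth 0%N (flatL alpha) t < m)%N.
Proof.
move=> Ht; have := mem_nth 0%N Ht.
by case/flattenP => s /mapP [j _ ->] /nseqP [-> _].
Qed.

Lemma main_gen (p q : {poly C}) (b m : nat) (alpha : 'I_m -> nat) :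
  (2 <= b)%N -> (exists j, alpha j <> 0%N) ->
  exists P Q : {poly C}, Q`_0 != 0 /\
    forall n, P`_n = \sum_(i < n.+1) Q`_i * useq p q b alpha (n - i)%N.
Proof.
move=> hb [j0 hj0].
set L := flatL alpha.
set r := size L.
have r0 : (0 < r)%N.
  rewrite lt0n; apply/negP => /eqP r0.
  have := prod_flat alpha (fun i => if i == (j0 : nat) then 0 else 1).
  rewrite -/L -/r r0 big_ord0 (bigD1 j0) //= eqxx expr0n.
  case: (alpha j0 =P 0%N) => // _; rewrite mul0r => /eqP; rewrite eq_sym oner_eq0.
  done.
pose t0 : 'I_r := Ordinal r0.
pose M := (size p + size q + m)%N.
have hM : (size p <= M)%N by rewrite /M; lia.
pose d (t : 'I_r) := nth 0%N L t.
have hd : forall t : 'I_r, (d t < m)%N by move=> t; apply: flatL_lt.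
pose sI (I : {ffun 'I_r -> 'I_(size q)}) : S r M :=
  [ffun t => inord (d t + M - I t)].
have shI : forall I t, sh (sI I t) = (d t)%:Z - (I t)%:Z.
  move=> I t; rewrite /sI ffunE /sh inordK; have := hd t; have := ltn_ord (I t);
  rewrite /M; lia.
pose w (s : S r M) := \sum_(I : {ffun 'I_r -> 'I_(size q)})
    (\prod_t q`_(I t)) * (sI I == s)%:R.
have Hu : forall n, useq p q b alpha n = \sum_(s : S r M) w s * T p b n s.
  move=> n; rewrite /useq.
  set N := (size (Fpoly p q b n) + m + m)%N.
  have -> : iota 0 N = index_iota 0 N by rewrite /index_iota subn0.
  rewrite big_mkord.
  pose f := fun k => \prod_(t < r) zc (q * G p b n) (k + (d t)%:Z).
  transitivity (zsw f m N).
    rewrite /zsw; apply: eq_bigr => i _.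
    rewrite (prod_flat alpha (fun j => coefc p q b n ((i%:Z - m%:Z) + j%:Z))).
    by apply: eq_bigr => t _; case: (_ + _).
  set B1 := (size (Fpoly p q b n) + m + (size (G p b n) + M))%N.
  have Hsf : forall k, f k != 0 -> (- m%:Z <= k) && (k < (size (Fpoly p q b n) + m)%:Z).
    move=> k; apply: (@prod_supp _ p b hb r M hM t0 (zc (q * G p b n)) _ m (fun t => (d t)%:Z) k).
    - exact: zc_supp.
    - by have := hd t0; lia.
  rewrite (@zsw_eq2 _ f B1 (B1 + B1) m N); first last.
  - move=> k /Hsf; rewrite /N; lia.
  - move=> k /Hsf; rewrite /B1; lia.
  rewrite -/(zs f B1).
  transitivity (zs (fun k => \sum_(I : {ffun 'I_r -> 'I_(size q)})
      (\prod_t q`_(I t)) * Tf p b n (fun t => sh (sI I t)) k) B1).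
    apply: eq_zs => k; rewrite /f /Tf.
    under eq_bigr => t _ do rewrite zc_mul.
    rewrite bigA_distr_bigA /=; apply: eq_bigr => I _.
    rewrite big_split /=; congr (_ * _); apply: eq_bigr => t _.
    by rewrite shI addrA.
  rewrite zs_sum.
  transitivity (\sum_(I : {ffun 'I_r -> 'I_(size q)})
      (\prod_t q`_(I t)) * T p b n (sI I)).
    apply: eq_bigr => I _; rewrite zs_mull; congr (_ * _).
    rewrite /T; apply: zs_widen.
    - exact: (@T_supp _ p b hb r M hM t0).
    - rewrite /B1; lia.
  under [RHS]eq_bigr => s' _ do rewrite /w mulr_suml.
  rewrite [RHS]exchange_big /=; apply: eq_bigr => I _.
  rewrite (bigD1 (sI I)) //= eqxx mulr1.
  rewrite [X in _ = _ + X]big1 ?addr0 //.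
  by move=> s' Hs'; rewrite eq_sym (negbTE Hs') mulr0 mul0r.
pose D := #|S r M|.
pose A : 'M[C]_D := \matrix_(i, j) Amat p b (enum_val i) (enum_val j).
pose V n : 'cV[C]_D := \col_i T p b n (enum_val i).
pose wr : 'rV[C]_D := \row_i w (enum_val i).
have HV : forall n, V n.+1 = A *m V n.
  move=> n; apply/matrixP => i j; rewrite !mxE (T_succ hb hM t0).
  by rewrite big_enum_val; apply: eq_bigr => k _; rewrite !mxE.
have HVn : forall n, V n = A ^+ n *m V 0%N.
  elim=> [|n IH]; first by rewrite expr0 mul1mx.
  by rewrite HV IH exprS mulmxA.

apply: (linrep_rat (A := A) (w := wr) (v := V 0%N)) => n.
rewrite -mulmxA -HVn Hu !mxE big_enum_val; apply: eq_bigr => i _.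
by rewrite !mxE.
Qed.
End Final.

Theorem theorem4p1 (R : realType) (p q : {poly R[i]}) (b : nat) (m : nat)
    (alpha : 'I_m -> nat) :
  (2 <= b)%N -> (exists j, alpha j <> 0%N) ->
  exists (P Q : {poly R[i]}),
    Q`_0 != 0 /\
    forall n : nat,
      P`_n = \sum_(i < n.+1) Q`_i * useq p q b alpha (n - i).
Proof. exact: main_gen. Qed.
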